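(* Let $\rho=(r,U)$ be a universally quantified rule and let $(\pi_i\colon L\to L_i,\gamma_i\colon L_i\rightharpoonup R_i)$, $i\in\{1,2\}$, be instantiations of $\rho$ with $(\pi_2,\gamma_2)=(\pi_1,\gamma_1)\oplus u$ for some $u\in U$. Let $\mu_L\colon L_2\rightharpoonup L_1$, $\mu_R\colon R_2\rightharpoonup R_1$ and $\mu_R'\colon R_1\rightharpoonup R'$ be subgraph morphisms with $\gamma_1\circ\mu_L=\mu_R\circ\gamma_2$, and let $m\colon R'\to G$ be a total injective morphism. Then for every pushout complement $H_2$ of $\mu_R'\circ\mu_R\circ\gamma_2$ and $m$ whose morphism $m_2'\colon L_2\to H_2$ is total and injective, there is a pushout complement $H_1$ of $\mu_R'\circ\gamma_1$ and $m$ with $H_1\sqsubseteq H_2$.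
   Context: Fix a finite label set $\Lambda$ with arity function $\mathrm{ar}\colon\Lambda\to\mathbb N$. A (hyper)graph $G=(V_G,E_G,c_G,l_G)$ consists of finite sets $V_G$ (nodes) and $E_G$ (edges), a connection function $c_G\colon E_G\to V_G^*$ and a labelling $l_G\colon E_G\to\Lambda$ with $|c_G(e)|=\mathrm{ar}(l_G(e))$; an edge $e$ is incident to a node $v$ if $v$ occurs in $c_G(e)$. A morphism $\phi\colon G\rightharpoonup G'$ is a pair of partial functions $\phi_V,\phi_E$ such that whenever $\phi_E(e)$ is defined, $\phi_V$ is defined on all nodes incident to $e$, $l_{G'}(\phi_E(e))=l_G(e)$ and $\phi_V(c_G(e))=c_{G'}(\phi_E(e))$. ''Total'' means defined everywhere. Pushouts are taken in the category of graphs and partial morphisms (always exist, unique up to isomorphism; concretely: quotient of $G_1\sqcup G_2$ by the smallest equivalence identifying $\phi(x)$ and $\psi(x)$ for $x\in G_0$, dropping classes containing the image of an $x\in G_0$ on which $\phi$ or $\psi$ is undefined and edge classes incident to dropped node classes). Given $a\colon A\rightharpoonup B$ and $b\colon B\rightharpoonup D$, a pushout complement of $a$ and $b$ is a graph $C$ with morphisms $c\colon A\rightharpoonup C$, $d\colon C\rightharpoonup D$ such that $D$ with $b,d$ is a pushout of $a,c$. A subgraph morphism is an injective and surjective morphism; $G_1\sqsubseteq G_2$ ($G_1$ is a subgraph of $G_2$) if there is a subgraph morphism $G_2\rightharpoonup G_1$. A universally quantified rule is $\rho=(r,U)$ with $r\colon L\rightharpoonup R$ and $U$ a finite set of pairs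 $u=(p_u,q_u)$, $p_u\colon L\to L_u$ total injective, $q_u\colon L_u\rightharpoonup R_u$, such that for every $x\in L$, $q_u(p_u(x))$ is defined and has exactly one preimage under $q_u$; $Q(u)$ is the set of $v\in V_L$ such that some edge incident to $p_u(v)$ has no preimage under $p_u$, required nonempty. Instantiations $(\pi\colon L\to\overline L$ total injective, $\gamma\colon\overline L\rightharpoonup\overline R)$ are defined recursively: $(\mathrm{id}_L,r)$ is one (length 0); if $(\pi,\gamma)$ is one of length $n$ and $u\in U$, let $\overline L_u$ with $p_u'\colon\overline L\to\overline L_u$, $\pi'\colon L_u\to\overline L_u$ be the pushout of $\pi,p_u$, let $\overline R_u$ with $\alpha\colon\overline R\rightharpoonup\overline R_u$, $\beta\colon R_u\rightharpoonup\overline R_u$ be the pushout of $\gamma\circ\pi$ and $q_u\circ p_u$, and $\eta\colon\overline L_u\rightharpoonup\overline R_u$ the unique morphism with $\eta\circ p_u'=\alpha\circ\gamma$, $\eta\circ\pi'=\beta\circ q_u$; then $(\pi,\gamma)\oplus u:=(p_u'\circ\pi,\eta)$ is an instantiation of length $n+1$. *)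

(* Defs.v *)
From mathcomp Require Import all_boot.
From Stdlib Require List.
Set Implicit Arguments. Unset Strict Implicit. Unset Printing Implicit Defensive.

Section Graphs.
Variable Lam : finType.
Variable ar : Lam -> nat.

Record graph := Graph {
  gV : finType;
  gE : finType;
  gc : gE -> seq gV;
  gl : gE -> Lam;
  gar : forall e, size (gc e) = ar (gl e) }.

(* Partial morphism: if phi_E(e) is defined, phi_V is defined on all nodes
   incident to e, labels agree and phi_V(c(e)) = c'(phi_E(e)). *)
Definition morph_axiom (G H : graph) (fV : gV G -> option (gV H))
  (fE : gE G -> option (gE H)) :=
  forall e e', fE e = Some e' ->
    @gl H e' = @gl G e /\ map fV (@gc G e) = map Some (@gc H e').

Record morph (G H : graph) := Morph {
  mV : gV G -> option (gV H);
  mE : gE G -> option (gE H);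
  mP : morph_axiom mV mE }.

Lemma idm_axiom (G : graph) : morph_axiom (fun v : gV G => Some v) (fun e => Some e).
Proof. by move=> e e' [<-]. Qed.

Definition idm (G : graph) : morph G G := Morph (@idm_axiom G).

Lemma comp_axiom (G H K : graph) (g : morph H K) (f : morph G H) :
  morph_axiom (fun v => obind (mV g) (mV f v)) (fun e => obind (mE g) (mE f e)).
Proof.
move=> e e''; case Hf: (mE f e) => [e'|] //= Hg.
have [l1 m1] := mP Hf; have [l2 m2] := mP Hg.
split; first by rewrite l2 l1.
have -> : map (fun v => obind (mV g) (mV f v)) (@gc G e)
         = map (obind (mV g)) (map (mV f) (@gc G e)) by rewrite -map_comp.
by rewrite m1 -map_comp m2.
Qed.

Definition mcomp (G H K : graph) (g : morph H K) (f : morph G H) : morph G K :=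
  Morph (@comp_axiom G H K g f).

Definition meq (G H : graph) (f g : morph G H) :=
  (forall v, mV f v = mV g v) /\ (forall e, mE f e = mE g e).

Definition total (G H : graph) (f : morph G H) :=
  (forall v, mV f v <> None) /\ (forall e, mE f e <> None).

Definition injective_m (G H : graph) (f : morph G H) :=
  (forall v v' w, mV f v = Some w -> mV f v' = Some w -> v = v') /\
  (forall e e' w, mE f e = Some w -> mE f e' = Some w -> e = e').

Definition surjective_m (G H : graph) (f : morph G H) :=
  (forall w, exists v, mV f v = Some w) /\ (forall w, exists e, mE f e = Some w).

Definition total_inj (G H : graph) (f : morph G H) := total f /\ injective_m f.

Definition subgraph_morph (G H : graph) (f : morph G H) :=
  injective_m f /\ surjective_m f.

Definition subgraph (G1 G2 : graph) := exists f : morph G2 G1, subgraph_morph f.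

Definition is_pushout (A B C D : graph) (a : morph A B) (c : morph A C)
  (b : morph B D) (d : morph C D) :=
  meq (mcomp b a) (mcomp d c) /\
  forall (X : graph) (b' : morph B X) (d' : morph C X),
    meq (mcomp b' a) (mcomp d' c) ->
    exists u : morph D X,
      meq (mcomp u b) b' /\ meq (mcomp u d) d' /\
      forall u' : morph D X, meq (mcomp u' b) b' -> meq (mcomp u' d) d' -> meq u' u.

Definition is_po_complement (A B D C : graph) (a : morph A B) (b : morph B D)
  (c : morph A C) (d : morph C D) := is_pushout a c b d.

Record quant (L : graph) := Quant {
  qLu : graph; qRu : graph; qp : morph L qLu; qq : morph qLu qRu }.

Record rule := Rule {
  rL : graph; rR : graph; rr : morph rL rR; rU : seq (quant rL) }.

Definition Qset (L : graph) (u : quant L) (v : gV L) : Prop :=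
  exists w e, mV (qp u) v = Some w /\ w \in @gc (qLu u) e /\
              forall e0, mE (qp u) e0 <> Some e.

Definition wf_quant (L : graph) (u : quant L) : Prop :=
  total_inj (qp u) /\
  (forall v w, mV (qp u) v = Some w ->
     exists y, mV (qq u) w = Some y /\ forall z, mV (qq u) z = Some y -> z = w) /\
  (forall e w, mE (qp u) e = Some w ->
     exists y, mE (qq u) w = Some y /\ forall z, mE (qq u) z = Some y -> z = w) /\
  (exists v, Qset u v).

Definition wf_rule (rho : rule) : Prop := forall u, List.In u (rU rho) -> wf_quant u.

Definition oplus (L Lb Rb L2 R2 : graph) (pi : morph L Lb) (gam : morph Lb Rb)
  (u : quant L) (pi2 : morph L L2) (gam2 : morph L2 R2) : Prop :=
  exists (p' : morph Lb L2) (pi' : morph (qLu u) L2)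
         (alpha : morph Rb R2) (beta : morph (qRu u) R2),
    is_pushout pi (qp u) p' pi' /\
    is_pushout (mcomp gam pi) (mcomp (qq u) (qp u)) alpha beta /\
    meq (mcomp gam2 p') (mcomp alpha gam) /\
    meq (mcomp gam2 pi') (mcomp beta (qq u)) /\
    meq pi2 (mcomp p' pi).

Inductive instantiation (rho : rule) :
  forall (Lb Rb : graph), morph (rL rho) Lb -> morph Lb Rb -> Prop :=
| inst_base : instantiation (idm (rL rho)) (rr rho)
| inst_step : forall (Lb Rb L2 R2 : graph) (pi : morph (rL rho) Lb)
    (gam : morph Lb Rb) (u : quant (rL rho)) (pi2 : morph (rL rho) L2)
    (gam2 : morph L2 R2),
    instantiation pi gam -> List.In u (rU rho) -> oplus pi gam u pi2 gam2 ->
    instantiation pi2 gam2.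

End Graphs.

(* Main.v *)
Require Import Defs.
From mathcomp Require Import all_boot.
From Stdlib Require List.
Set Implicit Arguments. Unset Strict Implicit. Unset Printing Implicit Defensive.
Lemma map_insub_all (T : Type) (p : pred T) (sT : subType p) (s : seq T) :
  all p s -> map (insub : T -> option sT) s = map Some (pmap (insub : T -> option sT) s).
Proof.
elim: s => //= x s IH /andP [px ps].
by rewrite (insubT p px) /= IH.
Qed.

Lemma map_val_pmap (T : Type) (p : pred T) (sT : subType p) (s : seq T) :
  all p s -> map val (pmap (insub : T -> option sT) s) = s.
Proof.
elim: s => //= x s IH /andP [px ps].
by rewrite (insubT p px) /= SubK IH.
Qed.

Lemma map_some_def (A : eqType) (B : Type) (f : A -> option B) s t v :
  map f s = map Some t -> v \in s -> f v <> None.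
Proof.
elim: s t => [|x s IH] [|y t] //= [e1 e2]; rewrite in_cons => /orP [/eqP ->|H].
  by rewrite e1.
exact: IH e2 H.
Qed.

Lemma map_some_in (A : eqType) (B : eqType) (f : A -> option B) s t z :
  map f s = map Some t -> z \in t -> exists2 v, v \in s & f v = Some z.
Proof.
elim: s t => [|x s IH] [|y t] //= [e1 e2]; rewrite in_cons => /orP [/eqP ->|H].
  by exists x; rewrite ?in_cons ?eqxx.
by have [v hv fv] := IH _ e2 H; exists v; rewrite // in_cons hv orbT.
Qed.

Lemma map_inv (A B : Type) (f : A -> option B) (g : B -> option A) s t :
  (forall v w, f v = Some w -> g w = Some v) ->
  map f s = map Some t -> map g t = map Some s.
Proof.
move=> H; elim: s t => [|x s IH] [|y t] //= [e1 e2].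
by rewrite (H _ _ e1) (IH _ e2).
Qed.
Definition remV (Lam : finType) (ar : Lam -> nat) (L2 L1 H2 : graph ar)
  (muL : morph L2 L1) (m2 : morph L2 H2) (h : gV H2) : bool :=
  [exists x, (mV muL x == None) && (mV m2 x == Some h)].

Definition remEd (Lam : finType) (ar : Lam -> nat) (L2 L1 H2 : graph ar)
  (muL : morph L2 L1) (m2 : morph L2 H2) (h : gE H2) : bool :=
  [exists x, (mE muL x == None) && (mE m2 x == Some h)] || has (remV muL m2) (gc h).

Section C.
Context (Lam : finType) (ar : Lam -> nat) (L2 L1 H2 : graph ar)
  (muL : morph L2 L1) (m2 : morph L2 H2).

Definition V1 : finType := {h : gV H2 | ~~ remV muL m2 h}.
Definition E1 : finType := {h : gE H2 | ~~ remEd muL m2 h}.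
Definition gc1 (e : E1) : seq V1 := pmap insub (gc (val e)).
Definition gl1 (e : E1) : Lam := gl (val e).

Lemma all_gc1 (e : gE H2) : ~~ remEd muL m2 e -> all (fun h => ~~ remV muL m2 h) (gc e).
Proof. by rewrite /remEd negb_or all_predC => /andP []. Qed.

Lemma gar1 (e : E1) : size (gc1 e) = ar (gl1 e).
Proof.
rewrite /gc1 /gl1 size_pmap_sub.
by move: (all_gc1 (valP e)); rewrite all_count => /eqP ->; exact: gar.

Qed.

Definition H1g : graph ar := Graph gar1.

Lemma s_ax : morph_axiom (G:=H2) (H:=H1g) (fun h => insub h) (fun e => insub e).
Proof.
move=> e e'; case: insubP => // u pu <- [<-]; split => //.
change (map (insub : _ -> option V1) (gc (val u)) = map Some (pmap insub (gc (val u)))).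
exact: (@map_insub_all _ (fun h => ~~ remV muL m2 h) V1 _ (all_gc1 (valP u))).
Qed.
Definition sm : morph H2 H1g := Morph s_ax.

Lemma i_ax : morph_axiom (G:=H1g) (H:=H2) (fun h => Some (val h)) (fun e => Some (val e)).
Proof.
move=> e e' [<-]; split => //.
change (map (fun h : V1 => Some (val h)) (pmap insub (gc (val e))) = map Some (gc (val e))).
rewrite (map_comp Some val) (@map_val_pmap _ (fun h => ~~ remV muL m2 h) V1 _ (all_gc1 (valP e))) //.
Qed.
Definition im : morph H1g H2 := Morph i_ax.
End C.

Section Inv.
Context (Lam : finType) (ar : Lam -> nat) (L2 L1 : graph ar) (muL : morph L2 L1).
Definition invV (y : gV L1) : option (gV L2) := [pick x | mV muL x == Some y].
Definition invE (y : gE L1) : option (gE L2) := [pick x | mE muL x == Some y].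

Hypothesis Hs : subgraph_morph muL.

Lemma invV_spec v w : mV muL v = Some w -> invV w = Some v.
Proof.
move=> h; rewrite /invV; case: pickP => [x /eqP hx|/(_ v)]; last by rewrite h eqxx.
by congr Some; apply: (proj1 (proj1 Hs)) hx h.
Qed.
Lemma invE_spec v w : mE muL v = Some w -> invE w = Some v.
Proof.
move=> h; rewrite /invE; case: pickP => [x /eqP hx|/(_ v)]; last by rewrite h eqxx.
by congr Some; apply: (proj2 (proj1 Hs)) hx h.
Qed.
Lemma invV_some y : exists x, invV y = Some x /\ mV muL x = Some y.
Proof.
have [x hx] := (proj1 (proj2 Hs)) y; exists x; split => //; exact: invV_spec.
Qed.
Lemma invE_some y : exists x, invE y = Some x /\ mE muL x = Some y.
Proof.
have [x hx] := (proj2 (proj2 Hs)) y; exists x; split => //; exact: invE_spec.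
Qed.

Lemma inv_ax : morph_axiom invV invE.
Proof.
move=> e' e he.
have [x [hx1 hx2]] := invE_some e'.
rewrite he in hx1; case: hx1 => ?; subst x.
have [l1 m1] := mP hx2; split => //.
apply: map_inv m1; exact: invV_spec.
Qed.
Definition invm : morph L1 L2 := Morph inv_ax.
End Inv.
Section Main.
Context (Lam : finType) (ar : Lam -> nat) (L2 L1 H2 R' G : graph ar)
  (muL : morph L2 L1) (m2 : morph L2 H2) (a1 : morph L1 R') (a2 : morph L2 R')
  (m : morph R' G) (d2 : morph H2 G).
Hypothesis HmuL : subgraph_morph muL.
Hypothesis Ha : meq (mcomp a1 muL) a2.
Hypothesis PO2 : is_pushout a2 m2 m d2.
Hypothesis Hm2 : injective_m m2.

Lemma remV_d2 h : remV muL m2 h -> mV d2 h = None.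
Proof.
case/existsP => x /andP [/eqP h1 /eqP h2].
have := (proj1 (proj1 PO2)) x; rewrite /= h2 /= => <-.
by rewrite -(proj1 Ha x) /= h1.
Qed.

Lemma remEd_d2 e : remEd muL m2 e -> mE d2 e = None.
Proof.
case/orP.
  case/existsP => x /andP [/eqP h1 /eqP h2].
  have := (proj2 (proj1 PO2)) x; rewrite /= h2 /= => <-.
  by rewrite -(proj2 Ha x) /= h1.
case/hasP => w win rw.
case E: (mE d2 e) => [e'|] //.
have [_ mm] := mP E.
by have := map_some_def mm win; rewrite remV_d2.
Qed.

Lemma notrem_V x y h : mV muL x = Some y -> mV m2 x = Some h -> ~~ remV muL m2 h.
Proof.
move=> h1 h2; apply/negP; case/existsP => x' /andP [/eqP h1' /eqP h2'].
by have := (proj1 Hm2) _ _ _ h2 h2' => ex; subst x'; rewrite h1 in h1'.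
Qed.

Lemma notrem_E x y h : mE muL x = Some y -> mE m2 x = Some h -> ~~ remEd muL m2 h.
Proof.
move=> h1 h2; rewrite /remEd negb_or; apply/andP; split.
  apply/negP; case/existsP => x' /andP [/eqP h1' /eqP h2'].
  by have := (proj2 Hm2) _ _ _ h2 h2' => ex; subst x'; rewrite h1 in h1'.
apply/negP; case/hasP => w win rw.
have [_ mm] := mP h2.
have [v vin hv] := map_some_in mm win.
have [_ ml] := mP h1.
have := map_some_def ml vin.
case E: (mV muL v) => [y'|] // _.
by have := notrem_V E hv; rewrite rw.
Qed.


Lemma insub_val (T : Type) (p : pred T) (sT : subType p) h (w : sT) :
  insub h = Some w -> val w = h.
Proof. by case: insubP => // u _ <- [->]. Qed.

Lemma main_po : exists (H1 : graph ar) (m1 : morph L1 H1) (d1 : morph H1 G),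
  is_pushout a1 m1 m d1 /\ subgraph H1 H2.
Proof.
exists (H1g muL m2), (mcomp (sm muL m2) (mcomp m2 (invm HmuL))), (mcomp d2 (im muL m2)).
split; last first.
  exists (sm muL m2); split; split.
  - by move=> v v' w h1 h2; rewrite -(insub_val h1) -(insub_val h2).
  - by move=> v v' w h1 h2; rewrite -(insub_val h1) -(insub_val h2).
  - by move=> w; exists (val w); rewrite /= valK.
  - by move=> w; exists (val w); rewrite /= valK.
split.
  split.
    move=> y /=.
    have [x [hx1 hx2]] := invV_some HmuL y.
    rewrite hx1 /=.
    have /= := proj1 (proj1 PO2) x.
    rewrite -(proj1 Ha x) /= hx2 /=.
    case E: (mV m2 x) => [h|] /= ->; last by [].
    by rewrite (insubT (fun h => ~~ remV muL m2 h) (notrem_V hx2 E)) /=.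
  move=> y /=.
  have [x [hx1 hx2]] := invE_some HmuL y.
  rewrite hx1 /=.
  have /= := proj2 (proj1 PO2) x.
  rewrite -(proj2 Ha x) /= hx2 /=.
  case E: (mE m2 x) => [h|] /= ->; last by [].
  by rewrite (insubT (fun h => ~~ remEd muL m2 h) (notrem_E hx2 E)) /=.
move=> X b' d' Hb.
have [|u [Hu1 [Hu2 Huniq]]] := proj2 PO2 X b' (mcomp d' (sm muL m2)).
  split.
    move=> x /=; rewrite -(proj1 Ha x) /=.
    case E: (mV muL x) => [y|] /=.
      have /= := proj1 Hb y.
      rewrite (invV_spec HmuL E) /= => ->.
      by case: (mV m2 x).
    case E2: (mV m2 x) => [h|] //=.
    rewrite insubF //=; apply/negbF/existsP; exists x; by rewrite E E2 !eqxx.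
  move=> x /=; rewrite -(proj2 Ha x) /=.
  case E: (mE muL x) => [y|] /=.
    have /= := proj2 Hb y.
    rewrite (invE_spec HmuL E) /= => ->.
    by case: (mE m2 x).
  case E2: (mE m2 x) => [h|] //=.
  rewrite insubF //=; apply/negbF/orP; left; apply/existsP; exists x; by rewrite E E2 !eqxx.
exists u; split => //; split.
  split.
    by move=> h /=; have /= -> := proj1 Hu2 (val h); rewrite valK.
  by move=> h /=; have /= -> := proj2 Hu2 (val h); rewrite valK.
move=> u' H1' H2'; apply: Huniq => //; split.
  move=> h /=; case: (boolP (remV muL m2 h)) => rh.
    by rewrite insubF /= ?rh // remV_d2.
  rewrite (insubT (fun h => ~~ remV muL m2 h) rh) /=.
  by have /= <- := proj1 H2' (Sub h rh).
move=> h /=; case: (boolP (remEd muL m2 h)) => rh.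
  by rewrite insubF /= ?rh // remEd_d2.
rewrite (insubT (fun h => ~~ remEd muL m2 h) rh) /=.
by have /= <- := proj2 H2' (Sub h rh).
Qed.
End Main.
Theorem mainTheorem3 (Lam : finType) (ar : Lam -> nat) (rho : rule ar)
  (Hrho : wf_rule rho)
  (L1 R1 L2 R2 R' G : graph ar)
  (pi1 : morph (rL rho) L1) (gam1 : morph L1 R1)
  (pi2 : morph (rL rho) L2) (gam2 : morph L2 R2)
  (Hinst1 : instantiation pi1 gam1) (Hinst2 : instantiation pi2 gam2)
  (u : quant (rL rho)) (Hu : List.In u (rU rho))
  (Hoplus : oplus pi1 gam1 u pi2 gam2)
  (muL : morph L2 L1) (muR : morph R2 R1) (muR' : morph R1 R')
  (HmuL : subgraph_morph muL) (HmuR : subgraph_morph muR)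
  (HmuR' : subgraph_morph muR')
  (Hcomm : meq (mcomp gam1 muL) (mcomp muR gam2))
  (m : morph R' G) (Hm : total_inj m) :
  forall (H2 : graph ar) (m2' : morph L2 H2) (d2 : morph H2 G),
    is_po_complement (mcomp muR' (mcomp muR gam2)) m m2' d2 ->
    total_inj m2' ->
    exists (H1 : graph ar) (m1' : morph L1 H1) (d1 : morph H1 G),
      is_po_complement (mcomp muR' gam1) m m1' d1 /\ subgraph H1 H2.
Proof.
move=> H2 m2' d2 PO2 Hm2.
apply: (main_po HmuL _ PO2 (proj2 Hm2)).
split.
  by move=> v /=; have /= <- := proj1 Hcomm v; case: (mV muL v).
by move=> v /=; have /= <- := proj2 Hcomm v; case: (mE muL v).
Qed.
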